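(* Any efficient strategy is regret-free.
   Context: Let $\mathcal{X}$ be a finite set of alternatives. A proto-ranking is an irreflexive and transitive binary relation on $\mathcal{X}$; a ranking is a total proto-ranking; a tournament is a total and asymmetric binary relation on $\mathcal{X}$. The chair has a fixed preference $\succ$, a ranking on $\mathcal{X}$. Interaction: given a tournament $\mathrel{W}$, start from $R_0=\varnothing$; in each period with $R_{t-1}$ not total the chair offers a pair $\{x,y\}$ unranked by $R_{t-1}$, the winner is $x$ if $x\mathrel{W}y$ and $y$ otherwise, and $R_t$ is the transitive closure of $R_{t-1}\cup\{(\text{winner},\text{loser})\}$; stop when $R_t$ is total. A strategy assigns to each non-terminal history (sequence of (winner, loser) pairs) a pair unranked at it; its outcome under $\mathrel{W}$ is the final ranking. A ranking is $\mathrel{W}$-feasible if it is the outcome under $\mathrel{W}$ of some strategy. $R$ is more aligned with $\succ$ than $R'$ if for all $x\succ y$, $xR'y$ implies $xRy$. A ranking is $\mathrel{W}$-unimprovable if no other $\mathrel{W}$-feasible ranking is more aligned with $\succ$. A strategy is regret-free if for every tournament $\mathrel{W}$ its outcome under $\mathrel{W}$ is $\mathrel{W}$-unimprovable. A ranking $R$ is $\mathrel{W}$-efficient if $x\succ y$ and $x\mathrel{W}y$ imply $xRy$; a strategy is efficient if for every tournament $\mathrel{W}$ its outcome under $\mathrel{W}$ is $\mathrel{W}$-efficient. *)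

(* Defs.v *)
From mathcomp Require Import all_boot.
Set Implicit Arguments. Unset Strict Implicit. Unset Printing Implicit Defensive.

Section Defs.
Variable X : finType.

Definition irreflexive_rel (R : rel X) := forall x, ~~ R x x.
Definition transitive_rel (R : rel X) := forall x y z, R x y -> R y z -> R x z.
Definition total_rel (R : rel X) := forall x y, x != y -> R x y || R y x.
Definition asymmetric_rel (R : rel X) := forall x y, R x y -> ~~ R y x.

Definition proto_ranking (R : rel X) := irreflexive_rel R /\ transitive_rel R.
Definition ranking (R : rel X) := proto_ranking R /\ total_rel R.
Definition tournament (W : rel X) := total_rel W /\ asymmetric_rel W.

(* (non-reflexive) transitive closure *)
Definition tclosure (R : rel X) : rel X :=
  fun x y => [exists z, R x z && connect R z y].

(* A history is a sequence of (winner, loser) pairs. *)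
Definition history := seq (X * X).

Definition add_pair (R : rel X) (p : X * X) : rel X :=
  tclosure (fun a b => R a b || ((a, b) == p)).
Definition Rof (h : history) : rel X := foldl add_pair (fun _ _ => false) h.

Definition terminal (h : history) := total_rel (Rof h).

Definition unranked (R : rel X) (p : X * X) :=
  [&& p.1 != p.2, ~~ R p.1 p.2 & ~~ R p.2 p.1].

Definition strategy := history -> X * X.
Definition valid_strategy (s : strategy) :=
  forall h : history, ~ terminal h -> unranked (Rof h) (s h).

(* winner first *)
Definition play_pair (W : rel X) (p : X * X) : X * X :=
  if W p.1 p.2 then p else (p.2, p.1).

Inductive play (s : strategy) (W : rel X) : history -> history -> Prop :=
| play_stop h : terminal h -> play s W h h
| play_step h h' : ~ terminal h -> play s W (rcons h (play_pair W (s h))) h' ->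
                   play s W h h'.

Definition outcome (s : strategy) (W : rel X) (R : rel X) :=
  exists h, play s W [::] h /\ R =2 Rof h.

Definition feasible (W : rel X) (R : rel X) :=
  ranking R /\ exists s, valid_strategy s /\ outcome s W R.

Definition more_aligned (pref : rel X) (R R' : rel X) :=
  forall x y, pref x y -> R' x y -> R x y.

Definition unimprovable (pref W : rel X) (R : rel X) :=
  forall R', feasible W R' -> ~ (R' =2 R) -> ~ more_aligned pref R' R.

Definition regret_free (pref : rel X) (s : strategy) :=
  forall W, tournament W -> forall R, outcome s W R -> unimprovable pref W R.

Definition efficient_ranking (pref W : rel X) (R : rel X) :=
  forall x y, pref x y -> W x y -> R x y.

Definition efficient (pref : rel X) (s : strategy) :=
  forall W, tournament W -> forall R, outcome s W R -> efficient_ranking pref W R.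

End Defs.

(* Main.v *)
Require Import Defs.
From mathcomp Require Import all_boot.
Set Implicit Arguments. Unset Strict Implicit.

Lemma connect_subT (X : finType) (S T : rel X) :
  (forall x y, S x y -> T x y) -> transitive_rel T ->
  forall x y, connect S x y -> x = y \/ T x y.
Proof.
move=> ST Tt x y /connectP[p pth ->]; clear y.
elim: p x pth => [|w p IH] x /=; first by left.
case/andP=> Sxw pth; case: (IH w pth) => [<-|H]; right; first exact: ST.
exact: Tt _ _ _ (ST _ _ Sxw) H.
Qed.

Lemma tclosure_sub (X : finType) (S T : rel X) :
  (forall x y, S x y -> T x y) -> transitive_rel T ->
  forall x y, tclosure S x y -> T x y.
Proof.
move=> ST Tt x y /existsP[z /andP[Sxz c]].
case: (connect_subT ST Tt c) => [<-|H]; first exact: ST.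
exact: Tt _ _ _ (ST _ _ Sxz) H.
Qed.

Lemma tclosure_trans (X : finType) (S : rel X) : transitive_rel (tclosure S).
Proof.
move=> x y z /existsP[u /andP[Sxu cuy]] /existsP[v /andP[Syv cvz]].
apply/existsP; exists u; rewrite Sxu /=; apply: connect_trans cuy _.
exact: connect_trans (connect1 Syv) cvz.
Qed.

Lemma tclosure_base (X : finType) (S : rel X) x y : S x y -> tclosure S x y.
Proof. by move=> Sxy; apply/existsP; exists y; rewrite Sxy connect0. Qed.

Lemma Rof_rcons (X : finType) (h : history X) p :
  Rof (rcons h p) = Defs.add_pair (Rof h) p.
Proof. by rewrite /Rof foldl_rcons. Qed.

Lemma Rof_mem (X : finType) (h : history X) a b : (a, b) \in h -> Rof h a b.
Proof.
elim/last_ind: h => [|h p IH] //.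
rewrite mem_rcons in_cons Rof_rcons => /orP[/eqP <-|/IH H].
  by apply: tclosure_base; rewrite /= eqxx orbT.
by apply: tclosure_base; rewrite H.
Qed.

Definition Ed (X : finType) (h : history X) : rel X := [rel a b | (a, b) \in h].

Lemma Rof_connect (X : finType) (h : history X) x y :
  Rof h x y -> connect (Ed h) x y.
Proof.
elim/last_ind: h x y => [|h p IH] x y //.
rewrite Rof_rcons => H.
apply: (tclosure_sub _ _ H); last by move=> ? ? ?; apply: connect_trans.
move=> a b /orP[/IH c|/eqP e].
  apply: connect_sub c => u v uv; apply: connect1.
  by move: uv; rewrite /Ed /= mem_rcons in_cons => ->; rewrite orbT.
by apply: connect1; rewrite /Ed /= mem_rcons e mem_head.
Qed.

Lemma add_pair_proto (X : finType) (R : rel X) a b :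
  proto_ranking R -> a != b -> ~~ R b a -> proto_ranking (Defs.add_pair R (a, b)).
Proof.
move=> [Ri Rt] ab nba; split; last exact: tclosure_trans.
have no_mid : forall v, (v == b) || R b v -> (v == a) || R v a -> False.
  move=> v /orP[/eqP Evb|Rbv] /orP[/eqP Eva|Rva].
  - by rewrite -Eva -Evb eqxx in ab.
  - by move: nba; rewrite -Evb Rva.
  - by move: nba; rewrite -Eva Rbv.
  - by rewrite (Rt _ _ _ Rbv Rva) in nba.
pose T := fun x y => R x y || ((x == a) || R x a) && ((y == b) || R b y).
have ST : forall x y, (fun u v => R u v || ((u, v) == (a, b))) x y -> T x y.
  move=> u v /orP[H|/eqP[-> ->]]; first by rewrite /T H.
  by rewrite /T !eqxx /= orbT.
have Tt : transitive_rel T.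
  move=> u v w /orP[Ruv|/andP[Hu Hv]] /orP[Rvw|/andP[Hv' Hw]].
  - by rewrite /T (Rt _ _ _ Ruv Rvw).
  - rewrite /T Hw andbT; apply/orP; right; apply/orP; right.
    case/orP: Hv' => [/eqP <-|Rva] //; exact: Rt _ _ _ Ruv Rva.
  - apply/orP; right; rewrite Hu /=.
    case/orP: Hv => [/eqP <-|Rbv]; first by rewrite Rvw orbT.
    by rewrite (Rt _ _ _ Rbv Rvw) orbT.
  - by case: (no_mid v Hv Hv').
move=> x; apply/negP => H.
case/orP: (tclosure_sub ST Tt H) => [Rxx|/andP[H1 H2]].
  by move: (Ri x); rewrite Rxx.
exact: (no_mid x H2 H1).
Qed.

Lemma play_inv (X : finType) (s : strategy X) (W : rel X) (P : history X -> Prop) :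
  (forall h, ~ terminal h -> P h -> P (rcons h (play_pair W (s h)))) ->
  forall h h', play s W h h' -> P h -> P h' /\ terminal h'.
Proof.
move=> step h h'; elim=> [h0 t|h0 h1 nt _ IH] Ph; first by split.
by apply: IH; apply: step.
Qed.

Lemma step_facts (X : finType) (s : strategy X) (W : rel X) h :
  valid_strategy s -> tournament W -> ~ terminal h ->
  [/\ (play_pair W (s h)).1 != (play_pair W (s h)).2,
      ~~ Rof h (play_pair W (s h)).2 (play_pair W (s h)).1 &
      W (play_pair W (s h)).1 (play_pair W (s h)).2].
Proof.
move=> vs [Wt Wa] nt; have := vs h nt; rewrite /unranked /play_pair.
case: (s h) => a b /= /and3P[ab nab nba].
case: ifP => Wab /=; first by rewrite ab nba Wab.
rewrite eq_sym ab nab; split => //.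
by have := Wt a b ab; rewrite Wab.
Qed.

Lemma allW_inv (X : finType) (s : strategy X) (W : rel X) h :
  valid_strategy s -> tournament W -> play s W [::] h ->
  all (fun p => W p.1 p.2) h /\ terminal h.
Proof.
move=> vs tW pl; apply: (@play_inv _ s W (fun h => all (fun p => W p.1 p.2) h) _ _ _ pl) => // h0 nt A0.
have [_ _ Wq] := step_facts vs tW nt.
by rewrite all_rcons Wq A0.
Qed.

Lemma proto_inv (X : finType) (s : strategy X) (W : rel X) h :
  valid_strategy s -> tournament W -> play s W [::] h ->
  proto_ranking (Rof h) /\ terminal h.
Proof.
move=> vs tW pl; apply: (@play_inv _ s W (fun h => proto_ranking (Rof h)) _ _ _ pl) => //.
  move=> h0 nt P0; have [q12 nq Wq] := step_facts vs tW nt.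
  move: q12 nq Wq; case: (play_pair W (s h0)) => a b /= q12 nq Wq.
  by rewrite Rof_rcons; apply: add_pair_proto.
Qed.

Theorem corollary1 (X : finType) (pref : rel X) (s : strategy X) :
  ranking pref -> valid_strategy s -> efficient pref s -> regret_free pref s.
Proof.
move=> [[pirr ptr] ptot] vs eff W tW R [h [pl ER]]
  R' [[[irr' tr'] tot'] [s' [vs' [h' [pl' ER']]]]] neq ma.
have [[irrh trh] termh] := proto_inv vs tW pl.
have [allW' _] := allW_inv vs' tW pl'.
have outR : outcome s W R by exists h.
have key : forall x y, R x y -> R' y x -> False.
  move=> x y Rxy R'yx; rewrite ER in Rxy; rewrite ER' in R'yx.
  have c := Rof_connect R'yx.
  case A: (all (fun p => Rof h p.1 p.2) h').
    have ST : forall a b, Ed h' a b -> Rof h a b.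
      by move=> a b ab; exact: (allP A (a, b) ab).
    case: (connect_subT ST trh c) => [E|Ryx].
      by move: (irrh x); rewrite -{2}E Rxy.
    by move: (irrh x); rewrite (trh _ _ _ Rxy Ryx).
  case/allPn: A => [[a b] inab /= nRab].
  have Wab : W a b := allP allW' (a, b) inab.
  have ab : a != b.
    apply/eqP => E; move: Wab; rewrite E => Wbb.
    by move: (tW.2 _ _ Wbb); rewrite Wbb.
  have R'ab : R' a b by rewrite ER'; apply: Rof_mem.
  have Rba : Rof h b a by move: (termh a b ab); rewrite (negbTE nRab).
  case pab: (pref a b).
    by move: (eff W tW R outR a b pab Wab); rewrite ER (negbTE nRab).
  have pba : pref b a by move: (ptot a b ab); rewrite pab.
  have R'ba : R' b a by apply: ma => //; rewrite ER.
  by move: (irr' a); rewrite (tr' _ _ _ R'ab R'ba).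
case: (boolP [forall x, forall y, R' x y == R x y]).
  move/forallP => H; exfalso; apply: neq => x y.
  exact/eqP/(forallP (H x)).
case/forallPn => x /forallPn [y /negP Hxy].
case Rxy: (R x y); case R'xy: (R' x y); rewrite ?Rxy ?R'xy // in Hxy.
  have xy : x != y.
    by apply/eqP => E; move: Rxy; rewrite E ER (negbTE (irrh y)).
  by move: (tot' x y xy); rewrite R'xy /= => /(key x y Rxy).
have xy : x != y.
  by apply/eqP => E; move: R'xy; rewrite E (negbTE (irr' y)).
have Ryx : R y x by rewrite ER; move: (termh x y xy); rewrite -ER Rxy.
exact: key y x Ryx R'xy.
Qed.
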